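(* Let $\epsilon>0$, $R\ge 0$, and let $h:(0,\infty)\to(0,\infty)$, $h(t)=\sinh^{-1}\!\left(\frac{1}{\sinh t}\right)$. Let $[xyvw]$ be a quadrilateral in $\mathbb{H}^n$ (consisting of the geodesic segments $[xy],[yv],[vw],[wx]$) with angles $\angle wxy=\frac{\pi}{2}$, $\angle xyv=\frac{\pi}{2}$ and $\angle xwv\ge\frac{\pi}{2}$. Suppose $d(x,w)\le \frac R2$, $d(y,v)\le\frac R2$ and $d(v,w)\ge h^{-1}(\frac{\epsilon}{2})+R$. Then $d(x,w)\le\frac{\epsilon}{2}$.
   Context: $\mathbb{H}^n$ is real hyperbolic $n$-space with metric $d$; the quadrilateral need not be planar. The function $h$ is a decreasing bijection of $(0,\infty)$. *)

(* Defs.v *)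
(* real hyperbolic n-space via the hyperboloid model in R^{n+1}. *)
From Stdlib Require Import Reals Lra.
Open Scope R_scope.

(* A point of R^{n+1} is a function nat -> R whose coordinates beyond n vanish. *)
Definition vec := nat -> R.

Definition mink (n : nat) (x y : vec) : R :=
  - (x 0%nat * y 0%nat) + sum_f 1 n (fun i => x i * y i).

Definition inHn (n : nat) (x : vec) : Prop :=
  mink n x x = -1 /\ 0 < x 0%nat /\ (forall i, (n < i)%nat -> x i = 0).

Definition arcosh (a : R) : R := ln (a + sqrt (a * a - 1)).
Definition arsinh (a : R) : R := ln (a + sqrt (a * a + 1)).

Definition hdist (n : nat) (x y : vec) : R := arcosh (- mink n x y).

(* Tangent vector at x of the geodesic from x towards y (unnormalised). *)
Definition tangent (n : nat) (x y : vec) : vec :=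
  fun i => y i + mink n x y * x i.

Definition hangle (n : nat) (y x z : vec) : R :=
  let u := tangent n x y in
  let w := tangent n x z in
  acos (mink n u w / (sqrt (mink n u u) * sqrt (mink n w w))).

Definition hfun (t : R) : R := arsinh (1 / sinh t).

(* Main.v *)
Require Import Defs.
From Stdlib Require Import Reals Lra Psatz.
Open Scope R_scope.

Lemma sum_ext (F G : nat -> R) m : (forall k, F k = G k) -> sum_f_R0 F m = sum_f_R0 G m.
Proof. intros H; induction m; simpl; rewrite ?IHm, ?H; reflexivity. Qed.

Lemma sum_lin (F G : nat -> R) a b m :
  sum_f_R0 (fun k => a * F k + b * G k) m = a * sum_f_R0 F m + b * sum_f_R0 G m.
Proof. induction m; simpl; [ring| rewrite IHm; ring]. Qed.

Lemma sum_sq (F : nat -> R) m : 0 <= sum_f_R0 (fun k => F k * F k) m.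
Proof. induction m; simpl; nra. Qed.

Lemma discr (al be ga : R) : 0 <= al -> (forall t, 0 <= al * (t*t) + 2 * be * t + ga) -> be * be <= al * ga.
Proof.
  intros Ha H. destruct (Req_dec al 0) as [E|E].
  - subst. destruct (Req_dec be 0) as [Eb|Eb]. subst; lra.
    specialize (H (- (ga + 1) / (2 * be))).
    replace (0 * _ + 2 * be * (- (ga + 1) / (2 * be)) + ga) with (-1) in H by (field; auto). lra.
  - specialize (H (- be / al)).
    replace (al * (- be / al * (- be / al)) + 2 * be * (- be / al) + ga) with ((al * ga - be*be)/al) in H by (field; auto).
    assert (0 < al) by lra.
    apply Rmult_le_compat_r with (r := al) in H; [|lra].
    unfold Rdiv in H. rewrite Rmult_assoc, Rinv_l in H by auto. lra.
Qed.

Lemma sum_cs (F G : nat -> R) m :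
  sum_f_R0 (fun k => F k * G k) m * sum_f_R0 (fun k => F k * G k) m
  <= sum_f_R0 (fun k => F k * F k) m * sum_f_R0 (fun k => G k * G k) m.
Proof.
  apply discr. apply sum_sq.
  intros t. pose proof (sum_sq (fun k => t * F k + G k) m) as H.
  assert (E : sum_f_R0 (fun k => (t * F k + G k) * (t * F k + G k)) m =
    (t*t) * sum_f_R0 (fun k => F k * F k) m + 2 * t * sum_f_R0 (fun k => F k * G k) m + 1 * sum_f_R0 (fun k => G k * G k) m).
  { clear H.
    induction m; simpl; [ring| rewrite IHm; ring]. }
  simpl in H. rewrite E in H. lra.
Qed.

Definition SS (n : nat) (p q : vec) := sum_f_R0 (fun k => p (k+1)%nat * q (k+1)%nat) (n - 1).

Lemma mink_SS n p q : mink n p q = - (p 0%nat * q 0%nat) + SS n p q.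
Proof. reflexivity. Qed.

Lemma mink_sym n p q : mink n p q = mink n q p.
Proof. rewrite !mink_SS; unfold SS. rewrite (sum_ext _ (fun k => q (k+1)%nat * p (k+1)%nat)) by (intros; ring). ring. Qed.

Lemma mink_comb n p q r c : mink n (fun i => p i + c * q i) r = mink n p r + c * mink n q r.
Proof.
  rewrite !mink_SS; unfold SS.
  rewrite (sum_ext _ (fun k => 1 * (p (k+1)%nat * r (k+1)%nat) + c * (q (k+1)%nat * r (k+1)%nat))) by (intros; ring).
  rewrite sum_lin. ring.
Qed.

Lemma mink_comb_r n p q r c : mink n r (fun i => p i + c * q i) = mink n r p + c * mink n r q.
Proof. rewrite mink_sym, mink_comb, (mink_sym n p), (mink_sym n q). ring. Qed.

Lemma SS_cs n p q : SS n p q * SS n p q <= SS n p p * SS n q q.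
Proof. apply sum_cs. Qed.

Lemma SS_nn n p : 0 <= SS n p p.
Proof. apply sum_sq. Qed.

Lemma perp_pos n p s : inHn n p -> mink n p s = 0 -> 0 <= mink n s s.
Proof.
  intros [Hp [Hp0 _]] Hs. rewrite mink_SS in *.
  pose proof (SS_cs n p s). pose proof (SS_nn n s). pose proof (SS_nn n p).
  set (P0 := p 0%nat) in *. set (S0 := s 0%nat) in *.
  assert (HS: SS n p s = P0 * S0) by lra.
  assert (HP: SS n p p = P0*P0 - 1) by lra.
  rewrite HS, HP in H.
  assert (P0*P0 * (S0 * S0) <= P0 * P0 * SS n s s) by nra.
  assert (0 < P0 * P0) by nra.
  assert (S0 * S0 <= SS n s s) by (apply (Rmult_le_reg_l (P0*P0)); lra).
  lra.
Qed.

Lemma perp_cs n p s t : inHn n p -> mink n p s = 0 -> mink n p t = 0 ->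
  mink n s t * mink n s t <= mink n s s * mink n t t.
Proof.
  intros Hp Hs Ht. apply discr. apply (perp_pos n p); auto.
  intros l. assert (mink n p (fun i => t i + l * s i) = 0) by (rewrite mink_comb_r; nra).
  pose proof (perp_pos n p _ Hp H).
  rewrite mink_comb, !mink_comb_r in H0.
  rewrite (mink_sym n t s) in H0. nra.
Qed.

Lemma tangent_perp n x y : inHn n x -> mink n x (tangent n x y) = 0.
Proof. intros [Hx _]. unfold tangent. rewrite mink_comb_r, Hx, (mink_sym n x y). ring. Qed.

Lemma tangent_sq n x y : inHn n x -> inHn n y -> mink n (tangent n x y) (tangent n x y) = mink n x y * mink n x y - 1.
Proof.
  intros Hx Hy. pose proof (tangent_perp n x y Hx) as T.
  unfold tangent in *. rewrite mink_comb, T.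
  rewrite mink_comb_r. destruct Hy as [Hy _]. rewrite Hy, (mink_sym n y x). ring.
Qed.

Lemma rev_cs n p q : inHn n p -> inHn n q -> mink n p q <= -1.
Proof.
  intros Hp Hq.
  pose proof (perp_pos n p _ Hp (tangent_perp n p q Hp)) as H1.
  rewrite tangent_sq in H1 by auto.
  assert (mink n p q < 0).
  { destruct Hp as [Hp [Hp0 _]]. destruct Hq as [Hq [Hq0 _]]. rewrite !mink_SS in *.
    pose proof (SS_cs n p q).
    pose proof (SS_nn n p). pose proof (SS_nn n q).
    assert (E1: SS n p p = p 0%nat * p 0%nat - 1) by lra.
    assert (E2: SS n q q = q 0%nat * q 0%nat - 1) by lra.
    rewrite E1, E2 in H.
    assert (SS n p q * SS n p q < (p 0%nat * q 0%nat) * (p 0%nat * q 0%nat)) by nra.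
    assert (0 < p 0%nat * q 0%nat) by nra. nra. }
  nra.
Qed.

Lemma acos_ge s : PI/2 <= acos s -> s <= 0.
Proof.
  unfold acos. pose proof PI_RGT_0. destruct (Rle_dec s (-1)); [lra|].
  destruct (Rle_dec 1 s); [lra|]. intros H0.
  destruct (Rle_or_lt s 0) as [|Hs]; auto.
  assert (0 < sqrt (1 - s²)) by (apply sqrt_lt_R0; unfold Rsqr; nra).
  assert (0 < s / sqrt (1 - s²)) by (apply Rdiv_lt_0_compat; auto).
  pose proof (atan_increasing _ _ H2). rewrite atan_0 in H3. lra.
Qed.

Lemma acos_eq s : acos s = PI/2 -> s = 0.
Proof.
  intros H. assert (s <= 0) by (apply acos_ge; lra).
  assert (- s <= 0) by (apply acos_ge; rewrite acos_opp; lra). lra.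
Qed.

Lemma angle_le n y x z : inHn n x -> PI/2 <= hangle n y x z ->
  mink n (tangent n x y) (tangent n x z) <= 0.
Proof.
  intros Hx H. unfold hangle in H. apply acos_ge in H.
  set (u := tangent n x y) in *. set (w := tangent n x z) in *.
  assert (Pu : mink n x u = 0) by apply tangent_perp, Hx.
  assert (Pw : mink n x w = 0) by apply tangent_perp, Hx.
  pose proof (perp_cs n x u w Hx Pu Pw) as CS.
  pose proof (sqrt_pos (mink n u u)). pose proof (sqrt_pos (mink n w w)).
  set (D := sqrt (mink n u u) * sqrt (mink n w w)) in *.
  destruct (Req_dec D 0) as [E|E].
  - unfold D in E. apply Rmult_integral in E. destruct E as [E|E];
    apply sqrt_eq_0 in E; try (apply (perp_pos n x); auto); rewrite E in CS; nra.
  - assert (0 < D) by (unfold D in *; nra).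
    assert (mink n u w = (mink n u w / D) * D) by (field; auto).
    rewrite H3. nra.
Qed.

Lemma angle_eq n y x z : inHn n x -> hangle n y x z = PI/2 ->
  mink n (tangent n x y) (tangent n x z) = 0.
Proof.
  intros Hx H. unfold hangle in H. apply acos_eq in H.
  set (u := tangent n x y) in *. set (w := tangent n x z) in *.
  assert (Pu : mink n x u = 0) by apply tangent_perp, Hx.
  assert (Pw : mink n x w = 0) by apply tangent_perp, Hx.
  pose proof (perp_cs n x u w Hx Pu Pw) as CS.
  set (D := sqrt (mink n u u) * sqrt (mink n w w)) in *.
  destruct (Req_dec D 0) as [E|E].
  - unfold D in E. apply Rmult_integral in E. destruct E as [E|E];
    apply sqrt_eq_0 in E; try (apply (perp_pos n x); auto); rewrite E in CS; nra.
  - assert (mink n u w = (mink n u w / D) * D) by (field; auto).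
    rewrite H0, H. ring.
Qed.

Lemma arcosh_facts A : 1 <= A ->
  cosh (arcosh A) = A /\ sinh (arcosh A) = sqrt (A*A-1) /\ 0 <= arcosh A.
Proof.
  intros HA. set (s := sqrt (A*A-1)).
  assert (Hs : 0 <= s) by apply sqrt_pos.
  assert (Hss : s * s = A*A-1) by (apply sqrt_sqrt; nra).
  assert (Hz : 0 < A + s) by lra.
  assert (E1 : exp (arcosh A) = A + s) by (unfold arcosh; apply exp_ln; auto).
  assert (E2 : exp (- arcosh A) = A - s).
  { rewrite exp_Ropp, E1. field_simplify_eq; [nra|lra]. }
  unfold cosh, sinh. rewrite E1, E2. split; [field|split;[field|]].
  unfold arcosh. fold s. destruct (Req_dec (A+s) 1) as [e|e].
  - rewrite e, ln_1; lra.
  - left. rewrite <- ln_1. apply ln_increasing; lra.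
Qed.

Lemma arcosh_lt A A' : 1 <= A -> A < A' -> arcosh A < arcosh A'.
Proof.
  intros H1 H2. unfold arcosh. apply ln_increasing.
  pose proof (sqrt_pos (A*A-1)); lra.
  pose proof (sqrt_le_1_alt (A*A-1) (A'*A'-1) ltac:(nra)). lra.
Qed.

Lemma arcosh_le A A' : 1 <= A -> A <= A' -> arcosh A <= arcosh A'.
Proof. intros H1 [H2|H2]. left; apply arcosh_lt; auto. subst; lra. Qed.

Lemma sinh_nonneg u : 0 <= u -> 0 <= sinh u.
Proof.
  intros H. unfold sinh. destruct (Req_dec u 0). subst. rewrite Ropp_0. lra.
  pose proof (exp_increasing (-u) u ltac:(lra)). lra.
Qed.

Lemma cosh_sinh u : cosh u * cosh u - sinh u * sinh u = 1.
Proof.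
  unfold cosh, sinh. rewrite exp_Ropp. pose proof (exp_pos u). field; lra.
Qed.

Lemma cosh_pos u : 0 < cosh u.
Proof. unfold cosh. pose proof (exp_pos u). pose proof (exp_pos (-u)). lra. Qed.

Lemma arcosh_cosh u : 0 <= u -> arcosh (cosh u) = u.
Proof.
  intros H. unfold arcosh.
  replace (cosh u * cosh u - 1) with (sinh u * sinh u) by (pose proof (cosh_sinh u); lra).
  rewrite sqrt_square by (apply sinh_nonneg; auto).
  replace (cosh u + sinh u) with (exp u) by (unfold cosh, sinh; field).
  apply ln_exp.
Qed.

Lemma cosh_plus' x y : cosh (x + y) = cosh x * cosh y + sinh x * sinh y.
Proof. unfold cosh, sinh. rewrite Ropp_plus_distr, !exp_plus. field. Qed.

Lemma sinh_plus' x y : sinh (x + y) = sinh x * cosh y + cosh x * sinh y.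
Proof. unfold cosh, sinh. rewrite Ropp_plus_distr, !exp_plus. field. Qed.

Lemma arsinh_eq a : arsinh a = arcsinh a.
Proof. unfold arsinh, arcsinh. f_equal. f_equal. f_equal. ring. Qed.

Lemma alg_core A Bb C E S :
  1 <= A -> 1 <= Bb -> 1 <= C -> 1 <= E -> S = A*Bb*C - E ->
  S * S <= (A*A-1)*(C*C-1) -> A * E <= Bb * C ->
  (Bb*Bb-1)*(A*A-1) <= 1.
Proof.
  intros HA HB HC HE HS CS W.
  assert (K : Bb*C*(A*A-1) <= A * S) by (subst; nra).
  destruct (Req_dec A 1) as [e|e]. subst A. nra.
  assert (0 < A*A-1) by nra.
  assert (0 <= S) by nra.
  assert (K2 : (Bb*C*(A*A-1))*(Bb*C*(A*A-1)) <= (A*S)*(A*S)) by (apply Rmult_le_compat; nra).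
  assert (K3 : (Bb*C)*(Bb*C)*(A*A-1) <= A*A*(C*C-1)).
  { apply (Rmult_le_reg_l (A*A-1)); auto. nra. }
  assert (K4 : Bb*Bb*(A*A-1) <= A*A) by (apply (Rmult_le_reg_l (C*C)); nra).
  nra.
Qed.

Lemma tangent_inner n x p q : inHn n x ->
  mink n (tangent n x p) (tangent n x q) = mink n p q + mink n x p * mink n x q.
Proof.
  intros [Hx _]. unfold tangent. rewrite mink_comb, !mink_comb_r, Hx.
  rewrite (mink_sym n p x). ring.
Qed.

Theorem mainTheorem5 (n : nat) (eps R0 : R) (x y v w : vec) :
  0 < eps -> 0 <= R0 ->
  inHn n x -> inHn n y -> inHn n v -> inHn n w ->
  x <> y -> y <> v -> v <> w -> w <> x ->
  hangle n w x y = PI / 2 ->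
  hangle n x y v = PI / 2 ->
  PI / 2 <= hangle n x w v ->
  hdist n x w <= R0 / 2 ->
  hdist n y v <= R0 / 2 ->
  (forall t0 : R, 0 < t0 -> hfun t0 = eps / 2 -> hdist n v w >= t0 + R0) ->
  hdist n x w <= eps / 2.
Proof.
  intros Heps HR Hx Hy Hv Hw _ _ _ _ Ax Ay Aw Da Dc Hyp.
  apply angle_eq in Ax; auto. apply angle_eq in Ay; auto. apply angle_le in Aw; auto.
  rewrite tangent_inner in Ax, Ay, Aw by auto.
  assert (P1 : mink n x (tangent n y v) = 0).
  { unfold tangent. rewrite mink_comb_r. rewrite (mink_sym n y x) in Ay. lra. }
  pose proof (tangent_perp n x w Hx) as P2.
  pose proof (perp_cs n x _ _ Hx P1 P2) as CS.
  rewrite !tangent_sq in CS by auto.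
  assert (SV : mink n (tangent n y v) (tangent n x w) =
     mink n v w + mink n x w * mink n v x + mink n y v * (mink n y w + mink n x w * mink n y x)).
  { unfold tangent. rewrite mink_comb, !mink_comb_r. ring. }
  rewrite SV in CS.
  pose proof (rev_cs n x w Hx Hw). pose proof (rev_cs n x y Hx Hy).
  pose proof (rev_cs n y v Hy Hv). pose proof (rev_cs n v w Hv Hw).
  rewrite (mink_sym n w y), (mink_sym n v x), (mink_sym n y x) in *.
  rewrite (mink_sym n w x), (mink_sym n w v) in Aw.
  unfold hdist in *.
  set (A := - mink n x w) in *. set (Bb := - mink n x y) in *.
  set (C := - mink n y v) in *. set (E := - mink n v w) in *.
  assert (eA : mink n x w = - A) by (unfold A; ring).
  assert (eB : mink n x y = - Bb) by (unfold Bb; ring).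
  assert (eC : mink n y v = - C) by (unfold C; ring).
  assert (eE : mink n v w = - E) by (unfold E; ring).
  assert (eP : mink n x v = - (Bb * C)) by (rewrite eB, eC in Ay; lra).
  assert (eQ : mink n y w = - (A * Bb)) by (rewrite eA, eB in Ax; lra).
  rewrite eA, eB, eC, eE, eP, eQ in *.
  set (S := - E + - A * - (Bb * C) + - C * (- (A * Bb) + - A * - Bb)) in *.
  assert (HA : 1 <= A) by lra. assert (HB : 1 <= Bb) by lra.
  assert (HC : 1 <= C) by lra. assert (HE : 1 <= E) by lra.
  assert (HS : S = A * Bb * C - E) by (unfold S; ring).
  assert (CS' : S * S <= (A*A-1)*(C*C-1)) by (unfold S; nra).
  assert (W : A * E <= Bb * C) by nra.
  pose proof (alg_core A Bb C E S HA HB HC HE HS CS' W) as Core.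
  set (sg := sinh (eps/2)).
  assert (Hsg : 0 < sg) by (unfold sg; rewrite <- sinh_0; apply sinh_lt; lra).
  set (t0 := arcsinh (1/sg)).
  assert (Ht0 : 0 < t0) by (unfold t0; rewrite <- arcsinh_0; apply arcsinh_lt;
     apply Rdiv_lt_0_compat; lra).
  assert (Hst0 : sinh t0 = 1/sg) by (unfold t0; apply sinh_arcsinh).
  assert (Hh : hfun t0 = eps/2).
  { unfold hfun. rewrite arsinh_eq, Hst0. replace (1 / (1/sg)) with sg by (field; lra).
    unfold sg; apply arcsinh_sinh. }
  specialize (Hyp t0 Ht0 Hh).
  destruct (arcosh_facts A HA) as [cA [sA pA]].
  destruct (arcosh_facts C HC) as [cC [sC pC]].
  destruct (arcosh_facts E HE) as [cE [sE pE]].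
  set (a := arcosh A) in *. set (c := arcosh C) in *. set (e := arcosh E) in *.
  set (al := sqrt (A*A-1)) in *. set (ga := sqrt (C*C-1)) in *.
  assert (al0 : 0 <= al) by apply sqrt_pos. assert (ga0 : 0 <= ga) by apply sqrt_pos.
  assert (al2 : al * al = A*A-1) by (apply sqrt_sqrt; nra).
  assert (ga2 : ga * ga = C*C-1) by (apply sqrt_sqrt; nra).
  assert (KE : cosh (t0 + (a + c)) <= E).
  { destruct (Rle_or_lt (cosh (t0 + (a+c))) E) as [|L]; auto.
    apply arcosh_lt in L; auto. rewrite arcosh_cosh in L by lra. fold e in L. lra. }
  rewrite cosh_plus', cosh_plus', sinh_plus', cA, cC, sA, sC in KE.
  assert (Sl : - (al*ga) <= S).
  { destruct (Rle_or_lt (- (al*ga)) S); auto.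
    assert (0 <= al*ga) by nra.
    assert ((al*ga)*(al*ga) < S*S).
    { assert (0 < -S - al*ga) by lra. assert (0 < -S + al*ga) by lra.
      assert (0 < (-S - al*ga)*(-S + al*ga)) by (apply Rmult_lt_0_compat; auto). nra. }
    assert ((al*ga)*(al*ga) = (A*A-1)*(C*C-1)) by (rewrite <- al2, <- ga2; ring). lra. }
  assert (0 < cosh t0) by apply cosh_pos.
  assert (0 < sinh t0) by (rewrite Hst0; apply Rdiv_lt_0_compat; lra).
  assert (KB : cosh t0 <= Bb).
  { assert (0 <= al*ga) by nra.
    assert (al*ga <= Bb*(al*ga)) by nra.
    assert (Ebd : E <= Bb * (A*C + al*ga)) by nra.
    assert (0 <= al * C + A * ga) by nra.
    assert (0 <= sinh t0 * (al * C + A * ga)) by nra.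
    assert (1 <= A*C) by nra.
    apply (Rmult_le_reg_r (A*C+al*ga)); nra. }
  pose proof (cosh_sinh t0) as CSt. rewrite Hst0 in CSt.
  assert (K2 : (1/sg)*(1/sg) <= Bb*Bb - 1) by nra.
  assert (K3 : A*A - 1 <= sg * sg).
  { assert ((1/sg)*(1/sg) * (A*A-1) <= 1) by nra.
    replace (A*A-1) with ((sg*sg) * ((1/sg)*(1/sg) * (A*A-1))) by (field; lra).
    nra. }
  pose proof (cosh_sinh (eps/2)) as CSe. fold sg in CSe.
  pose proof (cosh_pos (eps/2)).
  assert (A <= cosh (eps/2)) by nra.
  rewrite <- (arcosh_cosh (eps/2)) by lra.
  apply arcosh_le; auto.
Qed.
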